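(* Fix an integer base $B\ge 2$. For every integer $k>0$ there are infinitely many positive integers $n$ with $h(n)\le -k$.
   Context: For a positive integer $n$, $\delta(n)$ is the number of digits of $n$ in base $B$, i.e. $\delta(n)=k$ iff $B^{k-1}\le n<B^k$. Define $\delta'(1)=0$ and $\delta'(a)=\delta(a)$ for $a>1$. If $n=\prod_{i} p_i^{a_i}$ is the prime power factorisation, set $\phi(n)=\sum_i \big(\delta(p_i)+\delta'(a_i)\big)$ (with $\phi(1)=0$), and $h(n)=\delta(n)-\phi(n)$. *)

(* Defs.v *)
From mathcomp Require Import all_boot all_order all_algebra.
Set Implicit Arguments. Unset Strict Implicit. Unset Printing Implicit Defensive.
Import GRing.Theory Num.Theory.

(* delta B n : number of digits of n in base B, i.e. the k with
   B^(k-1) <= n < B^k (for n >= 1, B >= 2). trunc_log B n is the largest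
   e with B^e <= n, hence delta = trunc_log B n + 1. *)
Definition delta (B n : nat) : nat := (trunc_log B n).+1.

Definition delta' (B a : nat) : nat := if a == 1 then 0 else delta B a.

Definition phi (B n : nat) : nat :=
  \sum_(pa <- prime_decomp n) (delta B pa.1 + delta' B pa.2).

Definition h (B n : nat) : int := (delta B n)%:Z - (phi B n)%:Z.

(* Main.v *)
Require Import Defs.
From mathcomp Require Import all_boot all_order all_algebra.
From mathcomp Require Import zify.
Set Implicit Arguments. Unset Strict Implicit. Unset Printing Implicit Defensive.

Lemma sum_ext a X (F : nat -> nat) : a <= X ->
  (forall k, a <= k < X -> F k = 0) ->
  \sum_(1 <= k < a) F k = \sum_(1 <= k < X) F k.
Proof.
move=> aX H0.
case: a aX H0 => [|a] aX H0.
  rewrite big_geq // big_nat_cond big1 // => k /andP[/andP[_ kX] _].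
  by apply: H0; rewrite kX.
rewrite [RHS](big_cat_nat _ (n:=a.+1)) //=.
have -> : \sum_(a.+1 <= k < X) F k = 0.
  rewrite big_nat_cond big1 // => k /andP[/andP[h1 h2] _].
  by apply: H0; rewrite h1 h2.
by rewrite addn0.
Qed.

Lemma fact_logR p m R : prime p -> m < p ^ R ->
  logn p m`! = \sum_(1 <= k < R) m %/ p ^ k.
Proof.
move=> pp mR; rewrite logn_fact //.
have p1 := prime_gt1 pp.
have z : forall k, m < p ^ k -> m %/ p ^ k = 0 by move=> k hk; rewrite divn_small.
rewrite (@sum_ext m.+1 (m.+1 + R)) ?leq_addr //; last first.
  move=> k /andP[h1 _]; apply: z; apply: (leq_trans (ltn_expl m p1)).
  by rewrite leq_exp2l // ltnW.
rewrite [in RHS](@sum_ext R (m.+1 + R)) ?leq_addl //.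
move=> k /andP[h1 _]; apply: z; apply: (leq_trans mR).
by rewrite leq_exp2l // ltnW.
Qed.

Lemma logn_bin p N K R : prime p -> K <= N -> N < p ^ R ->
  logn p 'C(N,K) + \sum_(1<=k<R) K %/ p^k + \sum_(1<=k<R) (N-K) %/ p^k
  = \sum_(1<=k<R) N %/ p^k.
Proof.
move=> pp KN NR.
have := bin_fact KN => /(congr1 (logn p)).
rewrite lognM ?bin_gt0 ?muln_gt0 ?fact_gt0 // lognM ?fact_gt0 //.
rewrite !(@fact_logR p _ R) //; last 2 first.
- exact: leq_ltn_trans (leq_subr _ _) NR.
- exact: leq_ltn_trans KN NR.
by rewrite addnA.
Qed.

Lemma logn_bin_le p N K : prime p -> K <= N -> 0 < N ->
  p ^ logn p 'C(N,K) <= N.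
Proof.
move=> pp KN N0.
have p1 := prime_gt1 pp.
set T := trunc_log p N.
have := logn_bin pp KN (trunc_log_ltn N p1).
have hle : \sum_(1 <= k < T.+1) N %/ p ^ k <=
   \sum_(1 <= k < T.+1) (K %/ p^k + (N-K) %/ p^k + 1).
  apply: leq_sum => k _.
  rewrite -{1}(subnKC KN) divnD ?expn_gt0 ?(ltnW p1) // leq_add2l.
  by case: (p ^ k <= _).
rewrite !big_split /= sum_nat_const_nat subn1 /= muln1 in hle.
move=> E.
rewrite -/T in E. have : logn p 'C(N, K) <= T by lia.
move=> h; apply: leq_trans (trunc_logP p1 N0).
by rewrite leq_exp2l.
Qed.

Lemma logn_bin1 p N K : prime p -> K <= N -> N < p * p ->
  logn p 'C(N,K) = N %/ p - K %/ p - (N-K) %/ p.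
Proof.
move=> pp KN Np.
have NR : N < p ^ 2 by rewrite expnS expn1.
have := @logn_bin p N K 2 pp KN NR.
rewrite !big_nat1 !expn1.
move: (logn _ _) (N %/ p) (K %/ p) ((N-K) %/ p) => e a b c; lia.
Qed.
Lemma binA n : n.+1 * 'C(n.*2.+1, n) = n.*2.+1 * 'C(n.*2, n).
Proof.
have := mul_bin_diag n.*2.+1 n; rewrite /= => ->.
rewrite -[in RHS](bin_sub (n := n.*2.+1) (m := n.+1)); last by lia.
by have -> : n.*2.+1 - n.+1 = n by lia.
Qed.

Lemma binB n : 'C(n.+1.*2, n.+1) = 2 * 'C(n.*2.+1, n).
Proof.
have := mul_bin_diag n.+1.*2 n.
have -> : (n.+1.*2).-1 = n.*2.+1 by lia.
move=> h.
have : n.+1 * 'C(n.+1.*2, n.+1) = n.+1 * (2 * 'C(n.*2.+1, n)).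
  rewrite -h; lia.
by move/eqP; rewrite eqn_mul2l /= => /eqP.
Qed.

Lemma bin_mid_lb n : 4 ^ n <= n.*2.+1 * 'C(n.*2, n).
Proof.
elim: n => [|n IH]; first by rewrite bin0.
have E : n.+1 * 'C(n.+1.*2, n.+1) = 2 * (n.*2.+1 * 'C(n.*2, n)).
  by rewrite binB mulnCA binA.
have : n.+1 * 4 ^ n.+1 <= n.+1 * (n.+1.*2.+1 * 'C(n.+1.*2, n.+1)).
  rewrite mulnCA E expnS.
  move: IH; set c := _ * 'C(_, _); nia.
by rewrite leq_mul2l.
Qed.

Lemma bin_odd_ub n : 'C(n.*2.+1, n) <= 4 ^ n.
Proof.
elim: n => [|n IH]; first by rewrite bin0.
have E : n.+2 * 'C(n.+1.*2.+1, n.+1) = n.+1.*2.+1 * (2 * 'C(n.*2.+1, n)).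
  by rewrite -binB binA.
have : n.+2 * 'C(n.+1.*2.+1, n.+1) <= n.+2 * 4 ^ n.+1.
  rewrite E expnS; move: IH; set c := 'C(_, _); nia.
by rewrite leq_mul2l.
Qed.

Lemma bin_term_le n i a b : i <= n ->
  'C(n, i) * (a ^ (n - i) * b ^ i) <= (a + b) ^ n.
Proof.
move=> iN; rewrite expnDn.
have ii : i < n.+1 by [].
rewrite (bigD1 (Ordinal ii)) //=.
exact: leq_addr.
Qed.


Lemma prod_logn m M : 0 < m -> m <= M ->
  \prod_(0 <= p < M.+1) p ^ logn p m = m.
Proof.
move=> m0 mM; rewrite -[RHS](partnT m0) (widen_partn _ mM).
by apply: eq_bigl => p.
Qed.

Lemma prod_sub a b M (F : nat -> nat) : b <= M.+1 -> (forall p, 0 < F p) ->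
  \prod_(a <= p < b) F p <= \prod_(0 <= p < M.+1) F p.
Proof.
move=> bM Fp.
have P0 : forall c d, 0 < \prod_(c <= p < d) F p by move=> c d; apply: prodn_gt0.
case: (leqP a b) => ab; last first.
 rewrite big_geq. exact: P0. exact: ltnW.
have e1 : \prod_(0 <= p < M.+1) F p = \prod_(0 <= p < b) F p * \prod_(b <= p < M.+1) F p.
  apply: big_cat_nat. done. done.
have e2 : \prod_(0 <= p < b) F p = \prod_(0 <= p < a) F p * \prod_(a <= p < b) F p.
  apply: big_cat_nat. done. done.

rewrite e1 e2.

rewrite mulnC mulnA.

apply: leq_pmull. rewrite muln_gt0 !P0. done.
Qed.


Lemma divq m d q : 0 < d -> q * d <= m -> m < q.+1 * d -> m %/ d = q.
Proof.
move=> d0 h1 h2; apply/eqP; rewrite eqn_leq -ltnS ltn_divLR // h2 leq_divRL //.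
Qed.

Definition prim m := \prod_(0 <= p < m.+1) (if prime p then p else 1).

Lemma prim_small_upper k : 1 <= k ->
  \prod_(k.+2 <= i < k.*2.+2) (if prime i then i else 1) <= 'C(k.*2.+1, k).
Proof.
move=> k1.
set M := 'C(k.*2.+1, k) + k.*2.+1.
have C0 : 0 < 'C(k.*2.+1, k) by rewrite bin_gt0; lia.
have CM : 'C(k.*2.+1, k) <= M by rewrite /M leq_addr.
rewrite -[X in _ <= X](prod_logn C0 CM).
apply: leq_trans (@prod_sub k.+2 k.*2.+2 M _ _ _); last first.
  by move=> p; apply: pfactor_gt0.
  rewrite /M. lia.
rewrite big_nat_cond [X in _ <= X]big_nat_cond.
apply: leq_prod => p /andP[/andP[h3 h4] _].
case: ifP => pp; last by apply: pfactor_gt0.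
have p0 := prime_gt0 pp.
rewrite logn_bin1 //; last by nia.
rewrite (@divq k.*2.+1 p 1) //; try lia.
rewrite (@divq k p 0) //; try lia.
rewrite (@divq (k.*2.+1 - k) p 0) //; try lia.
all: lia.
Qed.

Lemma prim_le m : prim m <= 4 ^ m.
Proof.
elim/ltn_ind: m => m IH.
case: (leqP m 2) => m2.
  case: m m2 IH => [|[|[|]]] // _ _; rewrite /prim.
  - by rewrite big_nat1.
  - by rewrite big_nat_recr // big_nat1.
  - by rewrite big_nat_recr // big_nat_recr // big_nat1.
have [om|em] := boolP (odd m).
  have mk : m = (m./2).*2.+1 by rewrite -[LHS]odd_double_half om.
  move: IH; set k := m./2 in mk *; move=> IH.
  have k1 : 1 <= k by lia.
  have e : prim m = \prod_(0 <= i < k.+2) (if prime i then i else 1) *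
                    \prod_(k.+2 <= i < k.*2.+2) (if prime i then i else 1).
    rewrite /prim mk; apply: big_cat_nat; lia.
  rewrite e.
  have h1 : \prod_(0 <= i < k.+2) (if prime i then i else 1) <= 4 ^ k.+1.
    by apply: (IH k.+1); lia.
  have h2 := prim_small_upper k1.
  have h3 := bin_odd_ub k.
  apply: leq_trans (leq_mul h1 (leq_trans h2 h3)) _.
  rewrite -expnD leq_exp2l //; lia.
have mk : m = (m.-1).+1 by lia.
have e : prim m = prim m.-1 * (if prime m then m else 1).
  by rewrite /prim {1}mk big_nat_recr //= -mk.
have np : prime m = false.
  apply/negP => pm; case: (even_prime pm) => h; first by lia.
  by rewrite h in em.
rewrite e np muln1.
apply: leq_trans (IH m.-1 _) _; first by lia.
rewrite leq_exp2l //; lia.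
Qed.


Lemma logn_np p m : ~~ prime p -> logn p m = 0.
Proof.
move=> np; apply/eqP; rewrite -leqn0 leqNgt logn_gt0 mem_primes.
by rewrite (negbTE np).
Qed.

Lemma pointwise u r p : 0 < u -> 64 * u < r * r ->
  (forall q, 32 * u < q <= 63 * u -> ~~ prime q) ->
  p ^ logn p 'C(64 * u, 32 * u) <=
  (if p < r then 64 * u else 1) * (if prime p && (p <= 64 * u %/ 3) then p else 1)
   * p ^ logn p 'C(64 * u, u).
Proof.
move=> u0 rr H.
have G1 : 0 < (if p < r then 64 * u else 1) by case: ifP => _; lia.
have G3 : 0 < p ^ logn p 'C(64 * u, u) by apply: pfactor_gt0.
have [pp|np] := boolP (prime p); last first.
  by rewrite logn_np // expn0 !muln_gt0 G1 G3.
rewrite /=.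
have p0 := prime_gt0 pp.
have p1 := prime_gt1 pp.
have G2 : 0 < (if p <= 64 * u %/ 3 then p else 1) by case: ifP.
have KN : 32 * u <= 64 * u by lia.
have N0 : 0 < 64 * u by lia.
have le1 := logn_bin_le pp KN N0.
case: (ltnP p r) => pr.
  apply: leq_trans le1 _.
  by rewrite -mulnA leq_pmulr // muln_gt0 G2 G3.
rewrite mul1n.
have Np : 64 * u < p * p by apply: leq_trans rr _; nia.
have e1 : logn p 'C(64 * u, 32 * u) <= 1.
  case: (leqP (logn p 'C(64 * u, 32 * u)) 1) => // h.
  have : p ^ 2 <= p ^ logn p 'C(64 * u, 32 * u) by rewrite leq_exp2l.
  rewrite expnS expn1 => h2.
  lia.
have pe : p ^ logn p 'C(64 * u, 32 * u) <= p.
  by rewrite -[X in _ <= X]expn1 leq_exp2l.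
have E := logn_bin1 pp KN Np.
case: (leqP p (64 * u %/ 3)) => h3.
  apply: leq_trans pe _.
  by rewrite leq_pmulr.
rewrite ltn_divLR // in h3.
case: (leqP p (32 * u)) => h4.
  have -> : logn p 'C(64 * u, 32 * u) = 0.
    rewrite E (@divq (64 * u) p 2) // ?(@divq (32 * u) p 1) //; try lia.
  by rewrite expn0 mul1n G3.
case: (leqP p (63 * u)) => h5.
  by have := H p; rewrite h4 h5 pp => /(_ isT).
case: (leqP p (64 * u)) => h6; last first.
  have -> : logn p 'C(64 * u, 32 * u) = 0.
    rewrite E !divn_small //; lia.
  by rewrite expn0 mul1n G3.
have KN' : u <= 64 * u by lia.
have -> : logn p 'C(64 * u, u) = 1.
  rewrite (logn_bin1 pp KN' Np) (@divq (64 * u) p 1) // ?(@divq u p 0) //; try lia.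
  rewrite (@divq (64 * u - u) p 0) //; lia.
by rewrite expn1 mul1n.
Qed.


Lemma bin_le_fact N K : K <= N -> 'C(N, K) <= N`!.
Proof.
move=> KN; rewrite -(bin_fact KN) leq_pmulr // muln_gt0 !fact_gt0 //.
Qed.

Lemma prod_split_const (F : nat -> nat) c M : c <= M.+1 ->
  (forall p, c <= p -> F p = 1) ->
  \prod_(0 <= p < M.+1) F p = \prod_(0 <= p < c) F p.
Proof.
move=> cM H.
rewrite (big_cat_nat _ (n := c)) //=.
have -> : \prod_(c <= p < M.+1) F p = 1.
  rewrite big_nat_cond big1 // => p /andP[/andP[h _] _]; exact: H.
by rewrite muln1.
Qed.

Lemma big_bound u r : 0 < u -> 64 * u < r * r -> r <= 64 * u ->
  (forall q, 32 * u < q <= 63 * u -> ~~ prime q) ->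
  'C(64 * u, 32 * u) <= (64 * u) ^ r * prim (64 * u %/ 3) * 'C(64 * u, u).
Proof.
move=> u0 rr r64 H.
set M := (64 * u)`! + 64 * u.
have C1 : 0 < 'C(64 * u, 32 * u) by rewrite bin_gt0; lia.
have C2 : 0 < 'C(64 * u, u) by rewrite bin_gt0; lia.
have C1M : 'C(64 * u, 32 * u) <= M.
  apply: leq_trans (bin_le_fact _) (leq_addr _ _); lia.
have C2M : 'C(64 * u, u) <= M.
  apply: leq_trans (bin_le_fact _) (leq_addr _ _); lia.
rewrite -[X in X <= _](prod_logn C1 C1M).
apply: leq_trans (leq_prod (fun p _ => pointwise p u0 rr H)) _.
rewrite !big_split /= (prod_logn C2 C2M).
apply: leq_mul; last exact: leqnn.
apply: leq_mul.
  rewrite (@prod_split_const _ r); last first.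
  - by move=> p rp; rewrite ltnNge rp.
  - rewrite /M; lia.
  rewrite (eq_big_nat _ _ (F2 := fun _ => 64 * u)); last first.
    by move=> p /andP[_ ->].
  by rewrite prod_nat_const_nat subn0.
rewrite (@prod_split_const _ (64 * u %/ 3).+1); last first.
- by move=> p rp; rewrite leqNgt rp andbF.
- rewrite /M; have : 64 * u %/ 3 <= 64 * u by apply: leq_div. lia.
rewrite /prim; apply: eq_leq; apply: eq_big_nat => p /andP[_ h].
by rewrite -ltnS h andbT.
Qed.


Lemma lin a : 6 <= a -> 4 * a + 16 <= 2 ^ a.
Proof.
elim: a => // a IH; rewrite leq_eqVlt => /orP[/eqP <- //|h].
rewrite expnS; have := IH h; lia.
Qed.

Lemma asym a : 6 <= a -> (2 * a + 8) * (2 ^ (a + 4) + 1) < 13 * (2 ^ a * 2 ^ a).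
Proof.
move=> a6; have h := lin a6; rewrite expnD.
move: h; set X := 2 ^ a; nia.
Qed.

Lemma numeric u : 0 < u -> 2 ^ 376 <= 63 ^ 63 -> True.
Proof. by []. Qed.

Lemma bert u : 2 ^ 12 <= u -> exists p, [/\ prime p, 32 * u < p & p <= 63 * u].
Proof.
move=> u12.
have u0 : 0 < u by apply: leq_trans u12; rewrite expn_gt0.
case: (boolP (has prime (iota (32 * u).+1 (31 * u)))).
  move/hasP => [p]; rewrite mem_iota => /andP[h1 h2] pp.
  by exists p; split => //; lia.
move/hasPn => nh.
have H : forall q, 32 * u < q <= 63 * u -> ~~ prime q.
  move=> q /andP[h1 h2]; apply: nh; rewrite mem_iota h1 /=; lia.
set L := trunc_log 2 u.
have L1 : 2 ^ L <= u by apply: trunc_logP.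
have L2 : u < 2 ^ L.+1 by apply: trunc_log_ltn.
have L12 : 12 <= L by apply: trunc_log_max.
set a := L./2.
have La : L = odd L + a.*2 by rewrite odd_double_half.
set r := 2 ^ (a + 4).
have rr : 64 * u < r * r.
  rewrite /r -expnD.
  apply: (@leq_trans (64 * 2 ^ L.+1)); first lia.
  have -> : 64 * 2 ^ L.+1 = 2 ^ (L + 7) by rewrite (expnD 2 L 7) mulnC expnS; lia.
  rewrite leq_exp2l //; lia.
have r64 : r <= 64 * u.
  apply: leq_trans (leq_mul (leqnn 64) L1).
  have -> : 64 * 2 ^ L = 2 ^ (L + 6) by rewrite (expnD 2 L 6) mulnC.
  rewrite leq_exp2l //; lia.
have B1 := bin_mid_lb (32 * u).
rewrite (_ : (32 * u).*2 = 64 * u) in B1; last lia.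
have B2 := big_bound u0 rr r64 H.
have B3 := prim_le (64 * u %/ 3).
have B4 := @bin_term_le (64 * u) u (63 * u) u (ltac:(lia)).
rewrite (_ : 64 * u - u = 63 * u) in B4; last lia.
rewrite (_ : 63 * u + u = 64 * u) in B4; last lia.
set C1 := 'C(64 * u, 32 * u) in B1 B2.
set C2 := 'C(64 * u, u) in B2 B4.
set Pm := prim _ in B2 B3.
set Q := 4 ^ ((64 * u) %/ 3) in B3.
set W := (63 * u) ^ (63 * u) * u ^ u in B4.
set Y := (64 * u).+1 * (64 * u) ^ r.
set Z := (64 * u) ^ (64 * u) in B4.
have S : 4 ^ (32 * u) * W <= Y * Q * Z.
  move: B1 B2 B3 B4; rewrite /Y.
  move: (4 ^ (32 * u)) ((64 * u).+1) ((64 * u) ^ r) C1 C2 Pm Q W Z.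
  move=> F K R c1 c2 pm q w z b1 b2 b3 b4.
  have e1 : F * w <= K * c1 * w := leq_mul b1 (leqnn w).
  have e2 : c1 <= R * q * c2.
    apply: leq_trans b2 _. apply: leq_mul (leqnn c2). exact: leq_mul (leqnn R) b3.
  have e3 : K * c1 * w <= K * (R * q * c2) * w.
    apply: leq_mul (leqnn w). exact: leq_mul (leqnn K) e2.
  have e4 : K * (R * q * c2) * w = K * R * q * (c2 * w) by rewrite !mulnA.
  have e5 : K * R * q * (c2 * w) <= K * R * q * z := leq_mul (leqnn _) b4.
  by apply: leq_trans e1 (leq_trans e3 _); rewrite e4.
exfalso.
have eW : W = 63 ^ (63 * u) * u ^ (64 * u).
  by rewrite /W expnMn -mulnA -expnD; congr (_ * _ ^ _); lia.
have eZ : Z = 64 ^ (64 * u) * u ^ (64 * u) by rewrite /Z expnMn.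
rewrite eW eZ mulnA [X in _ <= X]mulnA leq_pmul2r ?expn_gt0 ?u0 // in S.
have e4 : forall x, 4 ^ x = 2 ^ (2 * x) by move=> x; rewrite expnM.
have e64 : forall x, 64 ^ x = 2 ^ (6 * x) by move=> x; rewrite expnM.
have f1 : 4 ^ (32 * u) = 2 ^ (64 * u).
  by rewrite e4; congr (_ ^ _); lia.
have f3 : Q <= 2 ^ (43 * u).
  rewrite /Q e4 leq_exp2l //.
  move: (leq_trunc_div (64 * u) 3); move: (64 * u %/ 3) => x hx. lia.
have f4 : 64 ^ (64 * u) = 2 ^ (384 * u).
  by rewrite e64; congr (_ ^ _); lia.
have S2 : 2 ^ (13 * u) * 2 ^ (427 * u) <= Y * 2 ^ (427 * u).
  have g1 : 2 ^ (13 * u) * 2 ^ (427 * u) = 2 ^ (64 * u) * 2 ^ (376 * u).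
    by rewrite -!expnD; congr (_ ^ _); clear -u0; lia.
  have g2 : Y * 2 ^ (427 * u) = Y * 2 ^ (43 * u) * 2 ^ (384 * u).
    by rewrite -mulnA -expnD; congr (_ * _ ^ _); clear -u0; lia.
  rewrite g1 g2 -f1 -f4.
  have f2 : 2 ^ (376 * u) <= 63 ^ (63 * u).
    rewrite !expnM leq_exp2r; [clear -u0; lia | exact: u0].
  apply: leq_trans (leq_mul (leqnn _) f2) _.
  apply: leq_trans S _.
  by apply: leq_mul (leqnn _); apply: leq_mul (leqnn _) f3.
rewrite leq_pmul2r ?expn_gt0 // in S2.
clear S f1 f3 f4 eW eZ B1 B2 B3 B4.
have Y1 : Y <= 2 ^ ((L + 7) * r.+1).
  have h1 : (64 * u).+1 <= 2 ^ (L + 7).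
    rewrite expnD; move: L2; rewrite expnS; lia.
  rewrite /Y mulnS expnD; apply: leq_mul; first exact: h1.
  by rewrite expnM leq_exp2r // ?expn_gt0 //; apply: ltnW.
have T1 : 13 * u <= (L + 7) * r.+1.
  by rewrite -(@leq_exp2l 2) //; apply: leq_trans S2 Y1.
have a6 : 6 <= a by lia.
have A := asym a6.
have T2 : 2 ^ a * 2 ^ a <= 2 ^ L by rewrite -expnD leq_exp2l //; lia.
have T3 : (L + 7) * r.+1 <= (2 * a + 8) * (2 ^ (a + 4) + 1).
  rewrite /r addn1; apply: leq_mul (leqnn _); lia.
move: A T1 T2 T3 L1; set X := 2 ^ a * 2 ^ a; lia.
Qed.

Lemma goodprime B j : 2 <= B -> 2 ^ 17 <= B ^ j ->
  exists p, [/\ prime p, B ^ j < p & 64 * p <= 127 * B ^ j].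
Proof.
move=> B2 Bj.
set x := B ^ j in Bj *.
have hq := leq_trunc_div x 32.
have hq2 := ltn_ceil x (isT : 0 < 32).
set q := x %/ 32 in hq hq2.
have u12 : 2 ^ 12 <= q.+1 by move: Bj; rewrite (_ : 2 ^ 17 = 32 * 2 ^ 12) //; lia.
have [p [pp h1 h2]] := bert u12.
exists p; split => //; lia.
Qed.

Lemma delta_p B j p : 2 <= B -> B ^ j < p -> 64 * p <= 127 * B ^ j -> delta B p = j.+1.
Proof.
move=> B2 h1 h2; rewrite /delta; congr (_.+1); apply: trunc_log_eq => //.
rewrite ltnW //= expnS; nia.
Qed.

Lemma primes_mulp n p : prime p -> 0 < n -> p \notin primes n ->
  perm_eq (primes (n * p)) (p :: primes n).
Proof.
move=> pp n0 np; apply: uniq_perm; rewrite ?primes_uniq //=.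
  by rewrite np primes_uniq.
move=> q; rewrite in_cons !mem_primes muln_gt0 n0 prime_gt0 //=.
case qp: (prime q) => /=; last first.
  rewrite ?orbF ?andbF; apply/esym/negbTE/eqP => e; by rewrite e pp in qp.
by rewrite Euclid_dvdM // (dvdn_prime2 qp pp) orbC.
Qed.

Lemma build B N J0 : 2 <= B -> 2 ^ 17 <= B ^ J0 -> N < B ^ J0 -> forall M,
  exists n D, [/\ 0 < n, n * 64 ^ M <= 127 ^ M * B ^ D,
    D + M <= \sum_(p <- primes n) delta B p,
    (forall p, p \in primes n -> p < B ^ (J0 + M)) & (0 < M -> N < n)].
Proof.
move=> B2 BJ NJ; elim=> [|M [n [D [n0 hn hs hp hN]]]].
  by exists 1, 0; split => //.
set j := J0 + M.
have Bjj : B ^ J0 <= B ^ j by rewrite leq_pexp2l ?leq_addr //; lia.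
have [p [pp p1 p2]] := goodprime B2 (leq_trans BJ Bjj).
have dp := delta_p B2 p1 p2.
have np : p \notin primes n by apply/negP => /hp; rewrite ltnNge ltnW.
exists (n * p), (D + j); split.
- by rewrite muln_gt0 n0 prime_gt0.
- rewrite !expnS expnD.
  have : n * 64 ^ M * (64 * p) <= 127 ^ M * B ^ D * (127 * B ^ j) := leq_mul hn p2.
  move: (64 ^ M) (127 ^ M) (B ^ D) (B ^ j) => a b c d; nia.
- rewrite (perm_big _ (primes_mulp pp n0 np)) big_cons dp /=.
  move: hs; rewrite /j. set s := \sum_(_ <- _) _. lia.
- move=> q; rewrite (perm_mem (primes_mulp pp n0 np)) in_cons => /orP[/eqP ->|].
    rewrite addnS expnS -/j; nia.
  move/hp => h; apply: (leq_trans h); rewrite leq_pexp2l ?addnS //; lia.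
- move=> _; have := prime_gt0 pp; move: NJ Bjj p1; nia.
Qed.

Lemma bern a M : a ^ M * (a + M) <= a * (a + 1) ^ M.
Proof.
elim: M => [|M IH]; first by rewrite !expn0 addn0 mul1n muln1.
rewrite !expnS.
move: IH; move: (a ^ M) ((a + 1) ^ M) => x y h; nia.
Qed.

Lemma phi_ge B n : \sum_(p <- primes n) delta B p <= phi B n.
Proof.
rewrite /phi prime_decompE big_map /=.
by apply: leq_sum => p _; apply: leq_addr.
Qed.

Unset Implicit Arguments.
Import GRing.Theory Num.Theory.
Local Open Scope ring_scope.

Theorem proposition5 (B : nat) (hB : (2 <= B)%N) (k : nat) (hk : (0 < k)%N) :
  forall N : nat, exists n : nat, (N < n)%N /\ h B n <= - (k%:Z).
Proof.
move=> N.
pose J0 := (17 + N)%N.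
have BJ2 : (2 ^ J0 <= B ^ J0)%N by rewrite leq_exp2r // /J0 addSn.
have BJ : (2 ^ 17 <= B ^ J0)%N.
  by apply: leq_trans BJ2; rewrite leq_pexp2l // leq_addr.
have NJ : (N < B ^ J0)%N.
  apply: leq_trans BJ2; apply: leq_trans (@ltn_expl 2 N isT) _.
  by rewrite leq_pexp2l // leq_addl.
pose M := (127 * B ^ k)%N.
have M0 : (0 < M)%N by rewrite /M muln_gt0 expn_gt0; lia.
have [n [D [n0 hn hs _ hN]]] := build hB BJ NJ M.
exists n; split; first exact: hN.
have key : (delta B n + k <= phi B n)%N.
  have P := phi_ge B n.
  have T : (trunc_log B n + k < D + M)%N.
    rewrite -(ltn_exp2l _ _ hB) expnD.
    apply: leq_ltn_trans (leq_mul (trunc_logP hB n0) (leqnn (B ^ k))) _.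
    have b1 := bern 127 M.
    have b2 : (127 ^ M * (1 + B ^ k) <= 128 ^ M)%N.
      rewrite -(leq_pmul2l (isT : (0 < 127)%N)).
      apply: leq_trans b1; rewrite /M; lia.
    have b3 : (128 ^ M <= 64 ^ M * B ^ M)%N.
      by rewrite -expnMn leq_exp2r //; lia.
    have Q0 : (0 < 64 ^ M)%N by rewrite expn_gt0.
    rewrite -(ltn_pmul2r Q0) expnD.
    have P0 : (0 < 127 ^ M)%N by rewrite expn_gt0.
    move: hn b2 b3 Q0 P0; move: (64 ^ M)%N (127 ^ M)%N (128 ^ M)%N (B ^ D)%N (B ^ M)%N (B ^ k)%N.
    move=> q p r bd bm x h1 h2 h3 h4 h0.
    have h5 : (n * x * q <= p * bd * x)%N by nia.
    have h6 : (p * bd * x < p * (1 + x) * bd)%N.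
      nia.
    nia.
  rewrite /delta; lia.
rewrite /h; lia.
Qed.
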